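(* Let $G$ be a finitely generated group, and let $\mu$ be a symmetric, finitely supported probability measure on $G$ whose support generates $G$ and such that $\mu(e)>0$. Then the sequence $(\mu^{\ast n})_{n=1}^\infty$ measures index uniformly.
   Context: $\mu^{\ast n}$ is the $n$-fold convolution of $\mu$ (the distribution of the $n$th step of the random walk from the identity with step distribution $\mu$); symmetric means $\mu(x)=\mu(x^{-1})$. A sequence $(\mu_n)$ of probability measures measures index uniformly if $\mu_n(xH)\to1/[G:H]$ uniformly over all $x\in G$ and all subgroups $H$ of $G$, with $1/[G:H]=0$ when $H$ has infinite index. *)

(* Defs.v *)
From HB Require Import structures.
From mathcomp Require Import all_boot all_order all_algebra.
From mathcomp Require Import all_classical all_reals.
Set Implicit Arguments. Unset Strict Implicit. Unset Printing Implicit Defensive.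
Import Order.TTheory GRing.Theory Num.Theory.
Local Open Scope classical_set_scope.
Local Open Scope ring_scope.

Section GroupDefs.
Variable G : groupType.

Definition is_subgroup (H : set G) : Prop :=
  H 1%g /\ (forall x y, H x -> H y -> H (x * y^-1)%g).

Definition lcoset (x : G) (H : set G) : set G := [set (x * h)%g | h in H].

Definition cosets (H : set G) : set (set G) := [set lcoset x H | x in [set: G]].

Definition generated (S : set G) : set G :=
  [set x | forall H, is_subgroup H -> S `<=` H -> H x].

Definition generates (S : set G) : Prop := generated S = [set: G].

Definition finitely_generated : Prop :=
  exists S : set G, finite_set S /\ generates S.

Variable R : realType.

(* 1/[G:H], with the convention 1/[G:H] = 0 when the index is infinite *)
Definition inv_index (H : set G) : R :=
  if pselect (finite_set (cosets H))
  then ((xget 0%N [set n | (cosets H #= `I_n)%card])%:R)^-1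
  else 0.

Definition mass_support (mu : G -> R) : set G := [set x | mu x != 0].

Definition conv (nu mu : G -> R) : G -> R :=
  fun x => \sum_(y \in [set: G]) nu y * mu (y^-1 * x)%g.

(* n-fold convolution mu^{*n}: law of the n-th step of the random walk
   started at the identity with step distribution mu *)
Fixpoint convn (mu : G -> R) (n : nat) : G -> R :=
  match n with
  | 0 => fun x => (x == 1%g)%:R
  | n'.+1 => conv (convn mu n') mu
  end.

Definition mass (nu : G -> R) (A : set G) : R := \sum_(x \in A) nu x.

Definition measures_index_uniformly (nu : nat -> G -> R) : Prop :=
  forall eps : R, 0 < eps ->
    exists N : nat, forall n : nat, (N <= n)%N ->
      forall (x : G) (H : set G), is_subgroup H ->
        `| mass (nu n) (lcoset x H) - inv_index H | < eps.

End GroupDefs.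

(* Main.v *)
Require Import Defs.
From HB Require Import structures.
From mathcomp Require Import all_boot all_order all_algebra.
From mathcomp Require Import all_classical all_reals.
From mathcomp Require Import ring lra.
Import Order.TTheory GRing.Theory Num.Theory.
Local Open Scope classical_set_scope.
Local Open Scope ring_scope.

Set Implicit Arguments. Unset Strict Implicit. Unset Printing Implicit Defensive.

Section Helpers.
Variable R : realType.

Lemma fsumT_seq (X : choiceType) (s : seq X) (f : X -> R) :
  uniq s -> (forall x, f x != 0 -> x \in s) ->
  \sum_(x \in [set: X]) f x = \sum_(x <- s) f x.
Proof.
move=> us fs; rewrite (fsbigE s) //.
- by apply: eq_bigl => x; rewrite in_setT.
- by move=> x _ xs; apply/eqP; apply: contraNT xs => /fs.
Qed.

Lemma fin_seq (X : choiceType) (A : set X) : finite_set A ->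
  exists s : seq X, uniq s /\ forall x, A x -> x \in s.
Proof.
move=> fA; exists (finmap.enum_fset (fset_set A)); split; first exact: finmap.fset_uniq.
by move=> x Ax; rewrite in_fset_set // mem_set.
Qed.

Lemma sum_sub_seq (X : eqType) (t s : seq X) (f : X -> R) :
  uniq t -> uniq s -> {subset t <= s} -> (forall x, 0 <= f x) ->
  \sum_(x <- t) f x <= \sum_(x <- s) f x.
Proof.
move=> ut us ts f0.
rewrite [X in _ <= X](bigID (fun x => x \in t)) /=.
have -> : \sum_(x <- s | x \in t) f x = \sum_(x <- t) f x.
  rewrite -big_filter; apply: perm_big; apply: uniq_perm.
  - exact: filter_uniq.
  - exact: ut.
  by move=> x; rewrite mem_filter; apply/andP/idP => [[]//|xt]; split => //; apply: ts.
by rewrite lerDl sumr_ge0.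
Qed.

Lemma sum_ge_term (X : eqType) (s : seq X) (f : X -> R) x :
  uniq s -> x \in s -> (forall y, 0 <= f y) -> f x <= \sum_(y <- s) f y.
Proof.
move=> us xs f0; rewrite (bigD1_seq x) //= lerDl sumr_ge0 //.
Qed.

Lemma fsumN0 (X : choiceType) (D : set X) (f : X -> R) :
  \sum_(x \in D) f x != 0 -> exists2 x, D x & f x != 0.
Proof. by move=> h; exact: (@fsbigN1 _ _ _ unit X D (fun=> f) tt h). Qed.

Lemma sum_const_seq (X : Type) (s : seq X) (c : R) :
  \sum_(x <- s) c = (size s)%:R * c.
Proof.
elim: s => [|x s IH]; first by rewrite big_nil mul0r.
by rewrite big_cons IH /= -[(size s).+1]addn1 natrD mulrDl mul1r addrC.
Qed.

Lemma fsum_exchange (I J : choiceType) (F : I -> J -> R) (A : set I) (B : set J) :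
  finite_set A -> finite_set B -> (forall i j, F i j != 0 -> A i /\ B j) ->
  \sum_(i \in [set: I]) \sum_(j \in [set: J]) F i j =
  \sum_(j \in [set: J]) \sum_(i \in [set: I]) F i j.
Proof.
move=> fA fB hF.
have [sA [uA cA]] := fin_seq fA; have [sB [uB cB]] := fin_seq fB.
have inner1 i : \sum_(j \in [set: J]) F i j = \sum_(j <- sB) F i j.
  by apply: fsumT_seq => // j /hF [_ /cB].
have inner2 j : \sum_(i \in [set: I]) F i j = \sum_(i <- sA) F i j.
  by apply: fsumT_seq => // i /hF [/cA].
rewrite (@fsumT_seq _ sA (fun i => \sum_(j \in [set: J]) F i j)) //; last first.
  by move=> i /fsumN0 [j _ /hF [/cA]].
rewrite (@fsumT_seq _ sB (fun j => \sum_(i \in [set: I]) F i j)) //; last first.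
  by move=> j /fsumN0 [i _ /hF [_ /cB]].
under eq_bigr do rewrite inner1.
under [RHS]eq_bigr do rewrite inner2.
exact: exchange_big.
Qed.

Lemma fsum_ge_term (X : choiceType) (f : X -> R) x :
  finite_set [set y | f y != 0] -> (forall y, 0 <= f y) ->
  f x <= \sum_(y \in [set: X]) f y.
Proof.
move=> ff f0; have [s [us cs]] := fin_seq ff.
rewrite (@fsumT_seq _ s f us); last by move=> y fy; apply: cs.
have [->|fx] := eqVneq (f x) 0; first by apply: sumr_ge0.
by apply: sum_ge_term => //; apply: cs.
Qed.

Lemma fsum_pt (X : choiceType) (phi : X -> R) c :
  \sum_(x \in [set: X]) (c == x)%:R * phi x = phi c.
Proof.
rewrite (@fsumT_seq _ [:: c]) //; last first.
  by move=> x; rewrite mulf_eq0 negb_or pnatr_eq0 eqb0 negbK inE eq_sym => /andP[].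
by rewrite big_cons big_nil eqxx mul1r addr0.
Qed.

End Helpers.

Section Chain.
Variables (R : realType) (X : choiceType) (Om : set X) (P : X -> X -> R).
Variables (del alp iota : R).
Hypotheses (P0 : forall x y, 0 <= P x y) (Psym : forall x y, P x y = P y x)
  (Pfin : forall x, finite_set [set y | P x y != 0])
  (Pst : forall x, Om x -> \sum_(y \in [set: X]) P x y = 1)
  (POm : forall x y, Om x -> P x y != 0 -> Om y)
  (del0 : 0 < del) (Plazy : forall x, Om x -> del <= P x x).

Definition T (f : X -> R) y := \sum_(x \in [set: X]) f x * P x y.
Definition Nb (A : set X) := [set y | exists2 x, A x & P x y != 0].
Definition supp (f : X -> R) := [set x | f x != 0].

Lemma Nb_fin A : finite_set A -> finite_set (Nb A).
Proof.
move=> fA; apply: (sub_finite_set _ (bigcup_finite fA (fun x _ => Pfin x))).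
by move=> y [x Ax Pxy]; exists x.
Qed.

Lemma Nb_sub A : A `<=` Om -> A `<=` Nb A.
Proof.
move=> AOm x Ax; exists x => //; apply: lt0r_neq0.
exact: lt_le_trans del0 (Plazy (AOm _ Ax)).
Qed.

Lemma Nb_Om A : A `<=` Om -> Nb A `<=` Om.
Proof. by move=> AOm y [x Ax Pxy]; apply: POm Pxy; apply: AOm. Qed.

Lemma Nb_mono A B : A `<=` B -> Nb A `<=` Nb B.
Proof. by move=> AB y [x Ax Pxy]; exists x => //; apply: AB. Qed.

Lemma T_seq f s y : uniq s -> (forall x, f x != 0 -> x \in s) ->
  T f y = \sum_(x <- s) f x * P x y.
Proof.
move=> us fs; rewrite /T (fsumT_seq us) // => x; rewrite mulf_eq0 negb_or.
by case/andP => /fs.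
Qed.

Lemma T_supp f : supp (T f) `<=` Nb (supp f).
Proof.
move=> y; rewrite /supp /= /T => /fsumN0 [x _]; rewrite mulf_eq0 negb_or.
by case/andP => fx Pxy; exists x.
Qed.

Lemma T_fin f : finite_set (supp f) -> finite_set (supp (T f)).
Proof. by move=> ff; apply: sub_finite_set (T_supp (f:=f)) (Nb_fin ff). Qed.

Lemma T_ge0 f : (forall x, 0 <= f x) -> forall y, 0 <= T f y.
Proof. by move=> f0 y; apply: fsumr_ge0 => x _; rewrite mulr_ge0. Qed.

Lemma rowsum_seq x s : Om x -> uniq s -> (forall y, P x y != 0 -> y \in s) ->
  \sum_(y <- s) P x y = 1.
Proof. by move=> Ox us Ps; rewrite -(Pst Ox) (fsumT_seq us). Qed.

Lemma sum_T f : finite_set (supp f) -> supp f `<=` Om ->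
  \sum_(y \in [set: X]) T f y = \sum_(x \in [set: X]) f x.
Proof.
move=> ff fOm.
have [s [us sc]] := fin_seq (Nb_fin ff).
have fs : forall x, f x != 0 -> x \in s by move=> x fx; apply: sc; apply: Nb_sub.
rewrite (@fsumT_seq _ _ _ (T f) us); last by move=> y /T_supp; apply: sc.
rewrite (@fsumT_seq _ _ _ f us) //.
under eq_bigr do rewrite (T_seq _ us fs).
rewrite exchange_big /=; apply: eq_bigr => x _.
rewrite -mulr_sumr; have [->|fx] := eqVneq (f x) 0; first by rewrite mul0r.
rewrite rowsum_seq ?mulr1 //; first by apply: fOm.
by move=> y Pxy; apply: sc; exists x.
Qed.

Lemma T_sym f g : finite_set (supp f) -> finite_set (supp g) ->
  \sum_(y \in [set: X]) T f y * g y = \sum_(x \in [set: X]) f x * T g x.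
Proof.
move=> ff fg.
have fU : finite_set (supp f `|` supp g) by rewrite finite_setU.
have [s [us sc]] := fin_seq fU.
have fs : forall x, f x != 0 -> x \in s by move=> x fx; apply: sc; left.
have gs : forall x, g x != 0 -> x \in s by move=> x gx; apply: sc; right.
rewrite (@fsumT_seq _ _ _ (fun y => T f y * g y) us); last first.
  by move=> y; rewrite mulf_eq0 negb_or => /andP[_ /gs].
rewrite (@fsumT_seq _ _ _ (fun y => f y * T g y) us); last first.
  by move=> y; rewrite mulf_eq0 negb_or => /andP[/fs].
under eq_bigr do rewrite (T_seq _ us fs) mulr_suml.
under [RHS]eq_bigr do rewrite (T_seq _ us gs) mulr_sumr.
rewrite exchange_big /=; apply: eq_bigr => x _; apply: eq_bigr => y _.
by rewrite Psym mulrAC -mulrA mulrC.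
Qed.


Section Energy.
Variables (f : X -> R) (ff : finite_set (supp f)) (fOm : supp f `<=` Om).
Let F := supp f.
Let fs2 : finite_set (Nb (Nb F)) := Nb_fin (Nb_fin ff).
Let s := finmap.enum_fset (fset_set (Nb (Nb F))).
Let us : uniq s := finmap.fset_uniq _.
Let sc x : Nb (Nb F) x -> x \in s.
Proof. by move=> h; rewrite in_fset_set // mem_set. Qed.
Let FN : F `<=` Nb F := Nb_sub fOm.
Let NOm : Nb F `<=` Om := Nb_Om fOm.
Let NN : Nb F `<=` Nb (Nb F) := Nb_sub NOm.
Let fs x : f x != 0 -> x \in s.
Proof. by move=> h; apply/sc/NN/FN. Qed.

Definition W x x' := \sum_(y <- s) P x y * P x' y.

Lemma energy_id :
  2 * (\sum_(y \in [set: X]) f y ^+ 2 - \sum_(y \in [set: X]) T f y ^+ 2) =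
  \sum_(x <- s) \sum_(x' <- s) W x x' * (f x - f x') ^+ 2.
Proof.
have E1 : \sum_(y \in [set: X]) T f y ^+ 2 =
    \sum_(x <- s) \sum_(x' <- s) f x * f x' * W x x'.
  rewrite (@fsumT_seq _ _ _ (fun y => T f y ^+ 2) us); last first.
    by move=> y; rewrite sqrf_eq0 => /T_supp /NN /sc.
  under eq_bigr do rewrite (T_seq _ us fs) expr2 mulr_suml.
  under eq_bigr do under eq_bigr do rewrite mulr_sumr.
  rewrite exchange_big /=; apply: eq_bigr => x _.
  rewrite exchange_big /=; apply: eq_bigr => x' _.
  rewrite /W mulr_sumr; apply: eq_bigr => y _.
  ring.
have E2 : \sum_(y \in [set: X]) f y ^+ 2 =
    \sum_(x <- s) \sum_(x' <- s) f x ^+ 2 * W x x'.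
  rewrite (@fsumT_seq _ _ _ (fun y => f y ^+ 2) us); last first.
    by move=> y; rewrite sqrf_eq0 => /fs.
  apply: eq_bigr => x _; rewrite -mulr_sumr.
  have [->|fx] := eqVneq (f x) 0; first by rewrite expr0n /= !mul0r.
  suff -> : \sum_(x' <- s) W x x' = 1 by rewrite mulr1.
  rewrite /W exchange_big /=.
  under eq_bigr do rewrite -mulr_sumr.
  rewrite -[RHS](@rowsum_seq x s) //; last first.
  - by move=> y Pxy; apply/sc/NN; exists x.
  - by apply: fOm.
  apply: eq_bigr => y _; have [->|Pxy] := eqVneq (P x y) 0; first by rewrite !mul0r.
  rewrite (eq_bigr (fun x' => P y x')); last by move=> x' _; rewrite Psym.
  rewrite rowsum_seq ?mulr1 //; first by apply: NOm; exists x.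
  by move=> x' Pyx'; apply: sc; exists y => //; exists x.
have E3 : \sum_(x <- s) \sum_(x' <- s) f x ^+ 2 * W x x' =
    \sum_(x <- s) \sum_(x' <- s) f x' ^+ 2 * W x x'.
  rewrite exchange_big /=; apply: eq_bigr => x _; apply: eq_bigr => x' _.
  by rewrite /W; congr (_ * _); apply: eq_bigr => y _; rewrite mulrC.
rewrite E1 mulrBr mulr_natl mulr2n {2}E2 E3 E2.
rewrite mulr_sumr -big_split -sumrB /=; apply: eq_bigr => x _.
rewrite mulr_sumr -big_split -sumrB /=; apply: eq_bigr => x' _.
by rewrite sqrrB; ring.
Qed.

Lemma W_ge0 x x' : 0 <= W x x'.
Proof. by apply: sumr_ge0 => y _; rewrite mulr_ge0. Qed.

Lemma energy_ge0 : \sum_(y \in [set: X]) T f y ^+ 2 <= \sum_(y \in [set: X]) f y ^+ 2.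
Proof.
rewrite -subr_ge0 -(pmulr_rge0 _ (ltr0n _ 2)) energy_id.
by apply: sumr_ge0 => x _; apply: sumr_ge0 => x' _; rewrite mulr_ge0 ?W_ge0 ?sqr_ge0.
Qed.

Lemma energy_pair x0 x1 : 0 < alp -> f x0 != 0 -> alp <= P x1 x0 ->
  \sum_(y \in [set: X]) T f y ^+ 2 + del * alp / 2 * (f x0 - f x1) ^+ 2
   <= \sum_(y \in [set: X]) f y ^+ 2.
Proof.
move=> alp0 fx0 Pa.
have x0s : x0 \in s by apply: fs.
have x1s : x1 \in s.
  apply/sc/NN; exists x0 => //; rewrite Psym; apply: lt0r_neq0.
  exact: lt_le_trans alp0 Pa.
rewrite -lerBrDl -(ler_pM2l (ltr0n R 2)) energy_id.
have t1 : 0 <= (f x0 - f x1) ^+ 2 by apply: sqr_ge0.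
apply: le_trans (_ : W x0 x1 * (f x0 - f x1) ^+ 2 <= _).
  have -> : 2%:R * (del * alp / 2 * (f x0 - f x1) ^+ 2) =
     (del * alp) * (f x0 - f x1) ^+ 2 by field.
  apply: ler_wpM2r => //.
  apply: le_trans (_ : P x0 x0 * P x1 x0 <= _).
    apply: ler_pM => //; [exact: ltW | exact: ltW | exact: Plazy (fOm fx0)].
  by rewrite /W; apply: (@sum_ge_term _ _ _ (fun y => P x0 y * P x1 y)) => // y; rewrite mulr_ge0.
apply: le_trans (_ : \sum_(x' <- s) W x0 x' * (f x0 - f x') ^+ 2 <= _).
  apply: (@sum_ge_term _ _ _ (fun x' => W x0 x' * (f x0 - f x') ^+ 2)) => // y.
  by rewrite mulr_ge0 ?W_ge0 ?sqr_ge0.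
apply: (@sum_ge_term _ _ _ (fun x => \sum_(x' <- s) W x x' * (f x - f x') ^+ 2)) => // y.
by apply: sumr_ge0 => x' _; rewrite mulr_ge0 ?W_ge0 ?sqr_ge0.
Qed.

End Energy.

Hypotheses (alp0 : 0 < alp)
  (Pconn : forall x y, Om x -> Om y ->
     exists p : seq X, path (fun a b => alp <= P a b) x p /\ last x p = y)
  (iota0 : 0 <= iota)
  (Hiota : (iota = 0 /\ ~ finite_set Om) \/
           (finite_set Om /\ iota * \sum_(x \in Om) (1 : R) = 1)).

Definition good (f : X -> R) := [/\ forall x, 0 <= f x, finite_set (supp f),
  supp f `<=` Om & \sum_(x \in [set: X]) f x = 1].

Lemma good_T f : good f -> good (T f).
Proof.
case=> f0 ff fOm f1; split.
- exact: T_ge0.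
- exact: T_fin.
- by move=> y /T_supp; apply: Nb_Om.
- by rewrite sum_T.
Qed.

Definition sq (f : X -> R) := \sum_(y \in [set: X]) f y ^+ 2.

Lemma good_nz f : good f -> exists x, f x != 0.
Proof.
case=> _ _ _ f1; have : \sum_(x \in [set: X]) f x != 0 by rewrite f1 oner_neq0.
by case/fsumN0 => x _ fx; exists x.
Qed.

Lemma good_max f : good f -> exists x0, f x0 != 0 /\ sq f <= f x0.
Proof.
move=> gf; case: (gf) => f0 ff fOm f1.
case: (pselect (exists x0, f x0 != 0 /\ sq f <= f x0)) => // nex; exfalso.
have lt : forall x, f x != 0 -> f x < sq f.
  move=> x fx; rewrite ltNge; apply/negP => h; apply: nex; exists x; split => //.
have [s [us sc]] := fin_seq ff.
have fs : forall x, f x != 0 -> x \in s by move=> x fx; apply: sc.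
have e1 : sq f = \sum_(x <- s | f x != 0) f x * f x.
  rewrite /sq (@fsumT_seq _ _ _ (fun y => f y ^+ 2) us); last first.
    by move=> y; rewrite sqrf_eq0 => /fs.
  rewrite [RHS]big_mkcond /=; apply: eq_bigr => x _.
  by case: eqP => [->|_]; rewrite ?expr2 ?mul0r.
have e2 : \sum_(x <- s | f x != 0) f x = 1.
  rewrite -f1 (fsumT_seq us fs) [LHS]big_mkcond /=; apply: eq_bigr => x _.
  by case: eqP => [->|].
have hs : has (fun x => f x != 0) s.
  apply/hasP; have [x fx] := good_nz gf; exists x => //; exact: fs.
have : \sum_(x <- s | f x != 0) f x * f x < \sum_(x <- s | f x != 0) f x * sq f.
  apply: ltr_sum hs _ => x fx; rewrite ltr_pM2l ?lt //.
  by rewrite lt0r fx f0.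
by rewrite -mulr_suml e2 mul1r -e1 ltxx.
Qed.

Lemma good_low f : good f -> exists y, Om y /\ f y <= iota.
Proof.
move=> gf; case: (gf) => f0 ff fOm f1.
case: (pselect (exists y, Om y /\ f y <= iota)) => // nex; exfalso.
have gt : forall y, Om y -> iota < f y.
  move=> y Oy; rewrite ltNge; apply/negP => h; apply: nex; exists y; split => //.
case: Hiota => [[i0 infOm]|[finOm isum]].
  apply: infOm; apply: (sub_finite_set _ ff) => y Oy.
  by rewrite /supp /=; apply: lt0r_neq0; rewrite -i0; apply: gt.
have e1 : \sum_(x \in Om) f x = 1.
  rewrite -f1; apply: fsbig_widen => // x [_ nOx]; rewrite /preimage /=.
  by have [//|/fOm/nOx] := eqVneq (f x) 0.
move: e1 isum; rewrite !fsbig_finite //= => e1 isum.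
have [x fx] := good_nz gf.
set so := finmap.enum_fset (fset_set Om) in e1 isum *.
have : \sum_(y <- so) iota < \sum_(y <- so) f y.
  rewrite big_seq [X in _ < X]big_seq; apply: ltr_sum => [|y].
    by apply/hasP; exists x => //; rewrite /so in_fset_set // mem_set //; apply: fOm.
  by rewrite /so in_fset_set // => /set_mem; apply: gt.
by rewrite e1 -(mulr1 iota) -mulr_sumr isum ltxx.
Qed.

Lemma decay f eps : good f -> 0 < eps -> eps <= sq f - iota ->
  sq (T f) <= sq f - del * alp * eps ^+ 4 / 32%:R.
Proof.
move=> gf eps0 epsa; case: (gf) => f0 ff fOm f1.
set a := sq f - iota in epsa.
have a0 : 0 < a by apply: lt_le_trans epsa.
have [x0 [fx0 hx0]] := good_max gf.
have [y [Oy fy]] := good_low gf.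
have Ox0 : Om x0 by apply: fOm.
have [p [pp lp]] := Pconn Ox0 Oy.
move: lp; case: (shortenP pp) => p' pp' up' _ lp.
set q := x0 :: p'.
pose pr := fun v => f v <= iota + a / 2%:R.
set j := find pr q.
have hasq : has pr q.
  apply/hasP; exists (last x0 p'); first exact: mem_last.
  rewrite /pr lp; apply: le_trans fy _; rewrite lerDl divr_ge0 // ltW //.
have jq : (j < size q)%N by rewrite -has_find.
have prj : pr (nth x0 q j) by apply: nth_find.
have bef : forall i, (i < j)%N -> iota + a / 2%:R < f (nth x0 q i).
  by move=> i ij; have := before_find x0 ij; rewrite /pr => /negbT; rewrite -ltNge.
have j0 : (0 < j)%N.
  rewrite lt0n; apply/eqP => j0; move: prj; rewrite j0 /= /pr.
  apply/negP; rewrite -ltNge; apply: lt_le_trans hx0.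
  have ea : sq f = a + iota by rewrite /a subrK.
  rewrite ea; lra.
have [s [us sc]] := fin_seq ff.
have cnt : j%:R * (a / 2%:R) <= 1.
  set t := take j q.
  have ut : uniq t by apply: take_uniq.
  have st : size t = j by rewrite size_takel // ltnW.
  have tf : forall v, v \in t -> a / 2%:R < f v.
    move=> v /(nthP x0) [i]; rewrite st => ij <-; rewrite nth_take //.
    by apply: le_lt_trans (bef _ ij); rewrite lerDr.
  apply: le_trans (_ : \sum_(v <- t) f v <= _).
    rewrite -st -sum_const_seq big_seq [X in _ <= X]big_seq.
    by apply: ler_sum => v /tf /ltW.
  rewrite -f1 (@fsumT_seq _ _ _ f us); last by move=> x fx; apply: sc.
  apply: sum_sub_seq => // v vt; apply: sc; rewrite /supp /=.
  by apply: lt0r_neq0; apply: lt_trans (tf _ vt); rewrite divr_gt0.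
pose g i := f (nth x0 q i).
have ea : sq f = a + iota by rewrite /a subrK.
have drop : a / 2%:R <= g 0%N - g j.
  have g0 : g 0%N = f x0 by [].
  move: prj; rewrite /pr -/(g j) => prj.
  rewrite g0; move: hx0; rewrite ea => hx0; lra.
have jR0 : 0 < (j%:R : R) by rewrite ltr0n.
have [i [ij hi]] : exists i, (i < j)%N /\ a / (2%:R * j%:R) <= g i - g i.+1.
  case: (pselect (exists i, (i < j)%N /\ a / (2%:R * j%:R) <= g i - g i.+1)) => // nex.
  exfalso.
  have : \sum_(0 <= i < j) (g i - g i.+1) < \sum_(0 <= i < j) (a / (2%:R * j%:R)).
    apply: ltr_sum_nat => // i /andP[_ ij]; rewrite ltNge; apply/negP => h.
    by apply: nex; exists i.
  rewrite (telescope_sumr_eq (fun k => - g k)) //; last by move=> k _; rewrite opprK addrC.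
  rewrite sumr_const_nat subn0 opprK addrC.
  have -> : a / (2%:R * j%:R) *+ j = a / 2%:R.
    by rewrite -mulr_natr; field; exact: lt0r_neq0.
  by move=> h; have := lt_le_trans h drop; rewrite ltxx.
have hi2 : a ^+ 2 / 4%:R <= g i - g i.+1.
  apply: le_trans hi.
  have -> : a ^+ 2 / 4%:R = a / (2%:R * j%:R) * (a * j%:R / 2%:R).
    field; exact: lt0r_neq0.
  rewrite -[X in _ <= X]mulr1; apply: ler_wpM2l.
    by rewrite divr_ge0 ?mulr_ge0 // ltW.
  by rewrite ler_pdivrMr // mul1r mulrC -[X in _ <= X]mulr1 -(mulr_natr 1) -mulrA mul1r; lra.
have ij' : (i < size p')%N by apply: leq_trans ij _; rewrite -ltnS.
have adj : alp <= P (nth x0 q i) (nth x0 q i.+1).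
  by move/(pathP x0): pp' => /(_ i ij').
have fx0' : f (nth x0 q i) != 0.
  apply: lt0r_neq0; apply: le_lt_trans (bef _ ij).
  by rewrite addr_ge0 // divr_ge0 // ltW.
have adj' : alp <= P (nth x0 q i.+1) (nth x0 q i) by rewrite Psym.
have := energy_pair ff fOm alp0 fx0' adj'.
rewrite -/(g i) -/(g i.+1) -/(sq (T f)) -/(sq f).
set d := g i - g i.+1 in hi2 *.
move=> en.
have e2 : eps ^+ 2 <= a ^+ 2 by rewrite lerXn2r // ?nnegrE ltW.
have dd : eps ^+ 2 / 4%:R <= d.
  by apply: le_trans hi2; rewrite ler_pM2r ?invr_gt0 ?ltr0n.
have d2 : (eps ^+ 2 / 4%:R) ^+ 2 <= d ^+ 2.
  by rewrite lerXn2r // ?nnegrE ?divr_ge0 ?sqr_ge0 //; apply: le_trans dd; rewrite divr_ge0 ?sqr_ge0.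
have : del * alp / 2%:R * (eps ^+ 2 / 4%:R) ^+ 2 <= del * alp / 2%:R * d ^+ 2.
  by apply: ler_wpM2l => //; rewrite divr_ge0 // mulr_ge0 // ltW.
have -> : del * alp / 2%:R * (eps ^+ 2 / 4%:R) ^+ 2 = del * alp * eps ^+ 4 / 32%:R.
  by field.
move: en; set u := del * alp / 2%:R * d ^+ 2; lra.
Qed.

Definition Tn n f := iter n T f.
Definition dlt (o : X) : X -> R := fun x => (x == o)%:R.

Lemma dlt_sum o (phi : X -> R) : \sum_(x \in [set: X]) phi x * dlt o x = phi o.
Proof.
rewrite (@fsumT_seq _ _ [:: o]) //; last first.
  by move=> x; rewrite /dlt mulf_eq0 negb_or pnatr_eq0 eqb0 negbK inE => /andP[].
by rewrite big_cons big_nil /dlt eqxx mulr1 addr0.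
Qed.

Lemma good_dlt o : Om o -> good (dlt o).
Proof.
move=> Oo; split.
- by move=> x; rewrite /dlt ler0n.
- apply: (sub_finite_set _ (finite_set1 o)) => x; rewrite /supp /dlt /=.
  by rewrite pnatr_eq0 eqb0 negbK => /eqP.
- by move=> x; rewrite /supp /dlt /= pnatr_eq0 eqb0 negbK => /eqP ->.
- rewrite -(dlt_sum o (fun=> 1)); apply: eq_fsbigr => x _; by rewrite mul1r.
Qed.

Lemma sq_dlt o : sq (dlt o) = 1.
Proof.
rewrite /sq -[RHS](dlt_sum o (fun=> 1)); apply: eq_fsbigr => x _.
by rewrite mul1r /dlt; case: (x == o) => /=; rewrite ?mulr1n ?mulr0n ?expr1n ?expr0n.
Qed.

Lemma Tn_fin n f : finite_set (supp f) -> finite_set (supp (Tn n f)).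
Proof. by move=> ff; elim: n => [|n IH] //=; apply: T_fin. Qed.

Lemma good_Tn n f : good f -> good (Tn n f).
Proof. by move=> gf; elim: n => [|n IH] //=; apply: good_T. Qed.

Lemma Tn_sym n f g : finite_set (supp f) -> finite_set (supp g) ->
  \sum_(y \in [set: X]) Tn n f y * g y = \sum_(x \in [set: X]) f x * Tn n g x.
Proof.
elim: n g => [|n IH] g ff fg; first by [].
rewrite [Tn n.+1 f]/Tn iterS -/(Tn n f) T_sym; last 2 first; [exact: Tn_fin | exact: fg |].
etransitivity; first exact: (IH (T g) ff (T_fin fg)).
by apply: eq_fsbigr => x _; rewrite /Tn iterSr.
Qed.

Lemma sq_Tn_mono f m n : good f -> (m <= n)%N -> sq (Tn n f) <= sq (Tn m f).
Proof.
move=> gf; elim: n => [|n IH]; first by rewrite leqn0 => /eqP ->.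
rewrite leq_eqVlt => /orP[/eqP -> //|]; rewrite ltnS => /IH; apply: le_trans.
by case: (good_Tn n gf) => _ ff fOm _; apply: energy_ge0.
Qed.

Definition cdec (eps : R) := del * alp * eps ^+ 4 / 32%:R.
Definition N0 (eps : R) := (Num.truncn ((cdec eps)^-1)).+1.

Lemma cdec_gt0 eps : 0 < eps -> 0 < cdec eps.
Proof. by move=> e0; rewrite /cdec divr_gt0 // !mulr_gt0 // exprn_gt0. Qed.

Lemma N0_big eps : 0 < eps -> 1 < (N0 eps)%:R * cdec eps.
Proof.
move=> e0; have c0 := cdec_gt0 e0.
have := truncnS_gt ((cdec eps)^-1); rewrite -/(N0 eps) => h.
by rewrite -ltr_pdivrMr // div1r.
Qed.

Lemma hit f eps : good f -> 0 < eps -> sq f - iota <= 1 ->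
  exists t, (t <= N0 eps)%N /\ sq (Tn t f) - iota < eps.
Proof.
move=> gf e0 f1.
case: (pselect (exists t, (t <= N0 eps)%N /\ sq (Tn t f) - iota < eps)) => // nex.
exfalso.
have all : forall t, (t <= N0 eps)%N -> eps <= sq (Tn t f) - iota.
  move=> t ht; rewrite leNgt; apply/negP => h; apply: nex; exists t; split => //.
have ind : forall t, (t <= N0 eps)%N -> sq (Tn t f) - iota <= 1 - t%:R * cdec eps.
  elim => [_|t IH ht]; first by rewrite mul0r subr0.
  have := decay (good_Tn t gf) e0 (all t (ltnW ht)).
  rewrite -/(cdec eps) /Tn iterS -/(Tn t f) => h.
  have := IH (ltnW ht); rewrite -natr1 mulrDl mul1r.
  move: h; set u := sq (T (Tn t f)); set v := sq (Tn t f); lra.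
have := ind _ (leqnn _); have := all _ (leqnn (N0 eps)); have := N0_big e0.
set u := sq _; set w := _ * cdec eps; lra.
Qed.

Lemma after f eps : good f -> 0 < eps -> sq f - iota <= 1 ->
  forall n, (N0 eps <= n)%N -> sq (Tn n f) - iota < eps.
Proof.
move=> gf e0 f1 n hn; have [t [tN h]] := hit gf e0 f1.
apply: le_lt_trans h; rewrite lerD2r; apply: sq_Tn_mono => //.
exact: leq_trans tN hn.
Qed.

Lemma inner_upper g h : finite_set (supp g) -> finite_set (supp h) ->
  \sum_(x \in [set: X]) g x * h x <= (sq g + sq h) / 2%:R.
Proof.
move=> fg fh.
have fU : finite_set (supp g `|` supp h) by rewrite finite_setU.
have [s [us sc]] := fin_seq fU.
rewrite /sq (@fsumT_seq _ _ s (fun x => g x * h x)) //; last first.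
  by move=> x; rewrite mulf_eq0 negb_or => /andP[gx _]; apply: sc; left.
rewrite (@fsumT_seq _ _ s (fun x => g x ^+ 2)) //; last first.
  by move=> x; rewrite sqrf_eq0 => gx; apply: sc; left.
rewrite (@fsumT_seq _ _ s (fun x => h x ^+ 2)) //; last first.
  by move=> x; rewrite sqrf_eq0 => hx; apply: sc; right.
rewrite -subr_ge0.
have -> : (\sum_(x <- s) g x ^+ 2 + \sum_(x <- s) h x ^+ 2) / 2%:R -
    \sum_(x <- s) g x * h x = \sum_(x <- s) ((g x - h x) ^+ 2 / 2%:R).
  rewrite [RHS](eq_bigr (fun x => (g x ^+ 2 / 2%:R + h x ^+ 2 / 2%:R) - g x * h x)); last first.
    by move=> x _; field.
  by rewrite sumrB big_split /= -!mulr_suml mulrDl.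
by apply: sumr_ge0 => x _; rewrite divr_ge0 ?sqr_ge0.
Qed.

Lemma inner_lower g h : good g -> good h ->
  4%:R * iota <= sq g + sq h + 2%:R * \sum_(x \in [set: X]) g x * h x.
Proof.
case=> g0 fg gOm g1 [h0 fh hOm h1].
case: Hiota => [[-> _]|[finOm isum]].
  rewrite mulr0; apply: addr_ge0; first by apply: addr_ge0; apply: fsumr_ge0 => x _; apply: sqr_ge0.
  by apply: mulr_ge0 => //; apply: fsumr_ge0 => x _; apply: mulr_ge0.
move: isum; rewrite fsbig_finite //=.
set so := finmap.enum_fset (fset_set Om) => isum.
have us : uniq so by apply: finmap.fset_uniq.
have sc : forall x, Om x -> x \in so by move=> x Ox; rewrite /so in_fset_set // mem_set.
rewrite /sq (@fsumT_seq _ _ so (fun x => g x * h x)) //; last first.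
  by move=> x; rewrite mulf_eq0 negb_or => /andP[gx _]; apply/sc/gOm.
rewrite (@fsumT_seq _ _ so (fun x => g x ^+ 2)) //; last first.
  by move=> x; rewrite sqrf_eq0 => gx; apply/sc/gOm.
rewrite (@fsumT_seq _ _ so (fun x => h x ^+ 2)) //; last first.
  by move=> x; rewrite sqrf_eq0 => hx; apply/sc/hOm.
move: g1 h1; rewrite (@fsumT_seq _ _ so g) //; last by move=> x gx; apply/sc/gOm.
rewrite (@fsumT_seq _ _ so h) //; last by move=> x hx; apply/sc/hOm.
move=> g1 h1.
have : 0 <= \sum_(x <- so) (g x + h x - 2%:R * iota) ^+ 2.
  by apply: sumr_ge0 => x _; apply: sqr_ge0.
rewrite (eq_bigr (fun x => (g x ^+ 2 + h x ^+ 2 + 2%:R * (g x * h x)) +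
   ((4%:R * iota) * (iota * 1) - (4%:R * iota) * (g x + h x)))); last first.
  by move=> x _; ring.
rewrite big_split /= sumrB.
have e1 : \sum_(x <- so) (4%:R * iota) * (iota * 1) =
    (4%:R * iota) * (iota * \sum_(x <- so) 1) by rewrite !mulr_sumr.
have e2 : \sum_(x <- so) (4%:R * iota) * (g x + h x) =
    (4%:R * iota) * (\sum_(x <- so) g x + \sum_(x <- so) h x).
  by rewrite -big_split /= mulr_sumr.
have e3 : \sum_(x <- so) (g x ^+ 2 + h x ^+ 2 + 2%:R * (g x * h x)) =
    \sum_(x <- so) g x ^+ 2 + \sum_(x <- so) h x ^+ 2 +
    2%:R * \sum_(x <- so) (g x * h x).
  by rewrite !big_split /= mulr_sumr.
rewrite e1 e2 e3 isum g1 h1.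
move=> hh; lra.
Qed.

Lemma inner_bound g h : good g -> good h ->
  `| \sum_(x \in [set: X]) g x * h x - iota | <= ((sq g - iota) + (sq h - iota)) / 2%:R.
Proof.
move=> gg gh; have lo := inner_lower gg gh.
case: (gg) => _ fg _ _; case: (gh) => _ fh _ _; have up := inner_upper fg fh.
rewrite ler_norml; apply/andP; split.
  move: lo; set u := \sum_(x \in _) _; lra.
move: up; set u := \sum_(x \in _) _; lra.
Qed.

Lemma chain_main eps : 0 < eps -> forall n, (2 * N0 eps <= n)%N ->
  forall o z, Om o -> Om z -> `| Tn n (dlt o) z - iota | < eps.
Proof.
move=> e0 n hn o z Oo Oz.
have n1 : (N0 eps <= n - N0 eps)%N by rewrite leq_subRL ?addnn -?mul2n // (leq_trans _ hn) // leq_pmull.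
rewrite -(dlt_sum z (Tn n (dlt o))).
have -> : n = (N0 eps + (n - N0 eps))%N by rewrite subnKC // (leq_trans _ hn) // leq_pmull.
have fd : forall w, finite_set (supp (dlt w)).
  by move=> w; case: (good_dlt Oo) => _ ff _ _; apply: (sub_finite_set _ (finite_set1 w)) => x;
     rewrite /supp /dlt /= pnatr_eq0 eqb0 negbK => /eqP.
rewrite /Tn iterD -/(Tn _ _) -/(Tn _ _).
rewrite (Tn_sym (N0 eps) (Tn_fin _ (fd o)) (fd z)).
apply: le_lt_trans (inner_bound (good_Tn _ (good_dlt Oo)) (good_Tn _ (good_dlt Oz))) _.
have h1 : forall w, sq (dlt w) - iota <= 1 by move=> w; rewrite sq_dlt lerBlDr lerDl.
have a1 := after (good_dlt Oo) e0 (h1 o) n1.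
have a2 := after (good_dlt Oz) e0 (h1 z) (leqnn (N0 eps)).
move: a1 a2; set u := sq _ - iota; set v := sq _ - iota; lra.
Qed.

End Chain.


Section Grp.
Variable G : groupType.
Local Open Scope group_scope.

Definition rc (K : set G) (g : G) : set G := [set k * g | k in K].
Definition rt (C : set G) (s : G) : set G := [set c * s | c in C].

Lemma rtK C s : rt (rt C s) s^-1 = C.
Proof.
apply/seteqP; split => [y [z [c Cc <-] <-]|y Cy]; first by rewrite mulgK.
by exists (y * s); [exists y | rewrite mulgK].
Qed.

Lemma rt_rc K g s : rt (rc K g) s = rc K (g * s).
Proof.
apply/seteqP; split => [y [z [k Kk <-] <-]|y [k Kk <-]].
  by exists k => //; rewrite mulgA.
by exists (k * g); [exists k | rewrite mulgA].
Qed.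

Lemma rt1 C : rt C 1 = C.
Proof.
apply/seteqP; split => [y [c Cc <-]|y Cy]; first by rewrite mulg1.
by exists y => //; rewrite mulg1.
Qed.

Lemma lcoset_rc (H : set G) x :
  lcoset x H = rc [set x * h * x^-1 | h in H] x.
Proof.
apply/seteqP; split => [y [h Hh <-]|y [k [h Hh <-] <-]].
  by exists (x * h * x^-1); [exists h | rewrite mulgVK].
by exists h => //; rewrite mulgVK.
Qed.

Section Sub.
Variable H : set G.
Hypothesis sH : is_subgroup H.

Lemma sg1 : H 1. Proof. by case: sH. Qed.
Lemma sgV y : H y -> H y^-1.
Proof. by move=> Hy; case: sH => h1 hm; have := hm _ _ h1 Hy; rewrite mul1g. Qed.
Lemma sgM a b : H a -> H b -> H (a * b).
Proof.
by move=> Ha Hb; case: sH => _ hm; have := hm _ _ Ha (sgV Hb); rewrite invgK.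
Qed.

Lemma conj_sub x : is_subgroup [set x * h * x^-1 | h in H].
Proof.
split; first by exists 1; [exact: sg1 | rewrite mulg1 mulgV].
move=> a b [h1 H1 <-] [h2 H2 <-]; exists (h1 * h2^-1); first by apply: sgM => //; apply: sgV.
by rewrite !invgM invgK !mulgA mulgVK.
Qed.

Lemma rc_mem g y : rc H g y -> rc H y = rc H g.
Proof.
case=> k Hk <-; apply/seteqP; split => [z [k' Hk' <-]|z [k' Hk' <-]].
  by exists (k' * k); [exact: sgM | rewrite mulgA].
exists (k' * k^-1); first by apply: sgM => //; apply: sgV.
by rewrite -mulgA (mulgA k^-1) mulVg mul1g.
Qed.

Lemma rc_memE g y : rc H g y <-> rc H y = rc H g.
Proof.
split; first exact: rc_mem.
by move=> e; rewrite -e; exists 1; [exact: sg1 | rewrite mul1g].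
Qed.

End Sub.

Definition prodl (l : seq G) := foldr (fun a b => a * b) 1 l.

Lemma prodl_cat l1 l2 : prodl (l1 ++ l2) = prodl l1 * prodl l2.
Proof. by elim: l1 => [|a l IH] /=; rewrite ?mul1g // IH mulgA. Qed.

Lemma prodl_inv l : (prodl l)^-1 = prodl (rev (map (fun a => a^-1) l)).
Proof.
elim: l => [|a l IH] /=; first by rewrite invg1.
by rewrite invgM IH rev_cons -cats1 prodl_cat /= mulg1.
Qed.

Section Words.
Variable S : set G.
Hypothesis Ssym : forall s, S s -> S s^-1.

Definition words := [set x | exists l : seq G, (forall s, s \in l -> S s) /\ x = prodl l].

Lemma words_sub : is_subgroup words.
Proof.
split; first by exists [::].
move=> a b [l1 [h1 ->]] [l2 [h2 ->]].
exists (l1 ++ rev (map (fun a => a^-1) l2)); split; last by rewrite prodl_cat prodl_inv.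
move=> s; rewrite mem_cat => /orP[/h1 //|]; rewrite mem_rev => /mapP [t /h2 St ->].
exact: Ssym.
Qed.

Lemma gen_words : generates S -> forall x, words x.
Proof.
move=> gS x; have : generated S x by rewrite gS.
apply; first exact: words_sub.
by move=> s Ss; exists [:: s]; split; [move=> t; rewrite inE => /eqP -> | rewrite /= mulg1].
Qed.

End Words.

End Grp.

Section Walk.
Variables (R : realType) (G : groupType) (mu : G -> R).
Hypotheses (mu0 : forall x, 0 <= mu x) (mufin : finite_set (mass_support mu))
  (mu1 : \sum_(x \in [set: G]) mu x = 1) (musym : forall x, mu x = mu (x^-1)%g)
  (mugen : generates (mass_support mu)) (mue : 0 < mu 1%g).

Definition PK (C D : set G) : R := \sum_(s \in [set: G]) mu s * (rt C s == D)%:R.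

Lemma mus_fin (C : set G) (D : set G) :
  finite_set [set s | mu s * (rt C s == D)%:R != 0].
Proof.
apply: sub_finite_set mufin => s; rewrite /= mulf_eq0 negb_or => /andP[].
by rewrite /mass_support /=.
Qed.

Lemma PK_ge0 C D : 0 <= PK C D.
Proof. by apply: fsumr_ge0 => s _; rewrite mulr_ge0. Qed.

Lemma PK_sym C D : PK C D = PK D C.
Proof.
rewrite /PK [RHS](reindex_fsbigT (fun s => s^-1)%g); last exact: (Bijective invgK invgK).
apply: eq_fsbigr => s _; rewrite -musym.
have -> : (rt D s^-1 == C)%g = (rt C s == D).
  apply/eqP/eqP => [<-|<-]; last exact: rtK.
  by have := rtK D s^-1%g; rewrite invgK.
by [].
Qed.

Lemma PK_fin C : finite_set [set D | PK C D != 0].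
Proof.
apply: sub_finite_set (finite_image (rt C) mufin) => D /= /fsumN0 [s _].
rewrite mulf_eq0 negb_or pnatr_eq0 eqb0 negbK => /andP[ms /eqP <-].
by exists s.
Qed.

Lemma PK_st C : \sum_(D \in [set: set G]) PK C D = 1.
Proof.
rewrite /PK (@fsum_exchange _ _ _ _ (rt C @` mass_support mu) (mass_support mu)).
- apply: etrans mu1; apply: eq_fsbigr => s _; rewrite -mulr_fsumr.
  rewrite (@fsumT_seq _ _ [:: rt C s]) ?big_cons ?big_nil ?eqxx ?addr0 ?mulr1 //.
  by move=> D; case: (rt C s =P D) => [<- _|_]; rewrite ?mem_seq1 ?eqxx // mulr0n eqxx.
- exact: finite_image.
- exact: mufin.
move=> D s; rewrite mulf_eq0 negb_or pnatr_eq0 eqb0 negbK => /andP[ms /eqP <-].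
by split => //; exists s.
Qed.

Lemma PK_ge C s : mu s <= PK C (rt C s).
Proof.
rewrite /PK; apply: le_trans (_ : mu s * (rt C s == rt C s)%:R <= _).
  by rewrite eqxx mulr1.
apply: (@fsum_ge_term _ _ (fun t => mu t * (rt C t == rt C s)%:R)).
  exact: mus_fin.
by move=> t; rewrite mulr_ge0.
Qed.

Lemma PK_lazy C : mu 1%g <= PK C C.
Proof. by have := PK_ge C 1%g; rewrite rt1. Qed.

Lemma PK_nz C D : PK C D != 0 -> exists2 s, mu s != 0 & D = rt C s.
Proof.
move=> /fsumN0 [s _]; rewrite mulf_eq0 negb_or pnatr_eq0 eqb0 negbK.
by case/andP => ms /eqP <-; exists s.
Qed.

Lemma alp_ex : exists2 alp : R, 0 < alp & forall s, mu s != 0 -> alp <= mu s.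
Proof.
have [l [ul cl]] := fin_seq mufin.
suff [a a0 ha] : exists2 a : R, 0 < a & forall s, s \in l -> mu s != 0 -> a <= mu s.
  by exists a => // s ms; apply: ha => //; apply: cl.
elim: l {ul cl} => [|t l [a a0 ha]]; first by exists 1.
exists (Num.min a (if mu t != 0 then mu t else 1)).
  rewrite lt_min a0 /=; case: ifP => [mt|_]; [by rewrite lt0r mt mu0 | exact: ltr01].
move=> s; rewrite inE => /orP[/eqP ->|sl] ms.
  by rewrite ge_min ms lexx orbT.
by rewrite ge_min ha.
Qed.

Definition OmK (K : set G) := [set rc K g | g in [set: G]].

Lemma PK_Om K C D : OmK K C -> PK C D != 0 -> OmK K D.
Proof.
case=> g _ <-; case/PK_nz => s _ ->; exists (g * s)%g => //.
by rewrite rt_rc.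
Qed.

Lemma PK_step K alp : (forall s, mu s != 0 -> alp <= mu s) ->
  forall l g, (forall s, s \in l -> mass_support mu s) ->
  exists p, path (fun a b => alp <= PK a b) (rc K g) p /\
            last (rc K g) p = rc K (g * prodl l)%g.
Proof.
move=> ha; elim=> [|s l IH] g hl; first by exists [::]; rewrite /= mulg1.
have hl' : forall t, t \in l -> mass_support mu t.
  by move=> t tl; apply: hl; rewrite inE tl orbT.
have [p [pp lp]] := IH (g * s)%g hl'.
exists (rc K (g * s)%g :: p); split; last by rewrite /= lp mulgA.
rewrite /= pp andbT -rt_rc; apply: le_trans (PK_ge _ s); apply: ha.
by apply: (hl s); rewrite inE eqxx.
Qed.

Lemma PK_conn K alp : (forall s, mu s != 0 -> alp <= mu s) ->
  forall C D, OmK K C -> OmK K D ->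
  exists p, path (fun a b => alp <= PK a b) C p /\ last C p = D.
Proof.
move=> ha C D [g _ <-] [g' _ <-].
have Ssym : forall s, mass_support mu s -> mass_support mu (s^-1)%g.
  by move=> s; rewrite /mass_support /= -musym.
have [l [hl el]] := gen_words Ssym mugen (g^-1 * g')%g.
have [p [pp lp]] := PK_step K ha g hl.
by exists p; rewrite lp -el mulVKg.
Qed.

Lemma convn_fin n : finite_set (mass_support (convn mu n)).
Proof.
elim: n => [|n IH].
  apply: sub_finite_set (finite_set1 1%g) => x /=.
  by rewrite /mass_support /= pnatr_eq0 eqb0 negbK => /eqP.
apply: sub_finite_set (finite_image (fun p => (p.1 * p.2)%g) (finite_setX IH mufin)) => g.
rewrite /mass_support /= /conv => /fsumN0 [y _]; rewrite mulf_eq0 negb_or => /andP[vy my].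
by exists (y, (y^-1 * g)%g) => //=; rewrite mulVKg.
Qed.

Definition fib K n (C : set G) : R :=
  \sum_(g \in [set: G]) convn mu n g * (rc K g == C)%:R.

Lemma fib_T K n D : fib K n.+1 D = T PK (fib K n) D.
Proof.
set v := convn mu n.
have fv : finite_set (mass_support v) by apply: convn_fin.
have LHS : fib K n.+1 D = \sum_(y \in [set: G]) v y * PK (rc K y) D.
  rewrite /fib /= /conv.
  under eq_fsbigr do rewrite mulr_fsuml.
  rewrite (@fsum_exchange _ _ _ _
     [set (p.1 * p.2)%g | p in mass_support v `*` mass_support mu] (mass_support v)).
  - apply: eq_fsbigr => y _.
    rewrite (eq_fsbigr (fun g => v y * (mu (y^-1 * g)%g * (rc K g == D)%:R))); last first.
      by move=> g _; rewrite mulrA.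
    rewrite -mulr_fsumr; congr (_ * _).
    rewrite (reindex_fsbigT (fun s => y * s)%g); last exact: (Bijective (mulKg y) (mulVKg y)).
    by apply: eq_fsbigr => s _; rewrite mulKg rt_rc.
  - exact: finite_image (finite_setX fv mufin).
  - exact: fv.
  move=> g y; rewrite !mulf_eq0 !negb_or => /andP[/andP[vy my] _]; split => //.
  by exists (y, (y^-1 * g)%g) => //=; rewrite mulVKg.
rewrite LHS /T /fib.
under [RHS]eq_fsbigr do rewrite mulr_fsuml.
rewrite (@fsum_exchange _ _ _ _ (rc K @` mass_support v) (mass_support v)).
- apply: eq_fsbigr => y _.
  apply: etrans (esym (fsum_pt (fun C => v y * PK C D) (rc K y))) _.
  by apply: eq_fsbigr => C _; rewrite mulrCA mulrA.
- exact: finite_image.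
- exact: fv.
move=> C y; rewrite !mulf_eq0 !negb_or => /andP[/andP[vy]]; rewrite pnatr_eq0 eqb0 negbK.
by move=> /eqP <- _; split => //; exists y.
Qed.

Lemma fib_Tn K n : fib K n = Tn PK n (dlt R (rc K 1%g)).
Proof.
elim: n => [|n IH].
  apply: funext => C; rewrite /fib /= /dlt.
  rewrite (eq_fsbigr (fun g => (1%g == g)%:R * (rc K g == C)%:R)); last first.
    by move=> g _; rewrite eq_sym.
  by rewrite fsum_pt eq_sym.
apply: funext => C; rewrite fib_T IH.
by rewrite [in RHS]/Tn iterS.
Qed.

End Walk.

Section Index.
Variables (R : realType) (G : groupType) (H : set G) (x : G).
Hypothesis sH : is_subgroup H.

Let K := [set (x * h * x^-1)%g | h in H].
Definition phi (C : set G) := [set (c^-1 * x)%g | c in C].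

Lemma phi_rc g : phi (rc K g) = lcoset (g^-1 * x)%g H.
Proof.
apply/seteqP; split => [y [c [k [h Hh <-] <-] <-]|y [h Hh <-]].
  exists h^-1%g; first exact: sgV.
  by rewrite !invgM !invgK !mulgA mulgVK.
exists (x * h^-1 * x^-1 * g)%g; first by exists (x * h^-1 * x^-1)%g => //; exists h^-1%g => //; exact: sgV.
by rewrite !invgM !invgK !mulgA mulgVK.
Qed.

Lemma phi_inj : injective phi.
Proof.
have sub : forall C D, phi C = phi D -> C `<=` D.
  move=> C D e c Cc; have : phi D (c^-1 * x)%g by rewrite -e; exists c.
  by case=> d Dd /mulIg /invg_inj <-.
by move=> C D e; apply/seteqP; split; apply: sub.
Qed.

Lemma cosets_phi : cosets H = phi @` OmK K.
Proof.
apply/seteqP; split => [C [y _ <-]|C [D [g _ <-] <-]].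
  exists (rc K (x * y^-1)%g); first by exists (x * y^-1)%g.
  by rewrite phi_rc invgM invgK mulgVK.
by rewrite phi_rc; exists (g^-1 * x)%g.
Qed.

Lemma iota_ge0 : 0 <= inv_index R H.
Proof. by rewrite /inv_index; case: (pselect (finite_set (cosets H))) => [f|f]; rewrite ?invr_ge0 ?ler0n. Qed.

Lemma Hiota_ok : (inv_index R H = 0 /\ ~ finite_set (OmK K)) \/
  (finite_set (OmK K) /\ inv_index R H * \sum_(C \in OmK K) (1 : R) = 1).
Proof.
rewrite /inv_index; case: (pselect (finite_set (cosets H))) => fin.
  right.
  have finO : finite_set (OmK K).
    apply: sub_finite_set (finite_preimage (f := phi) (B := cosets H) _ fin).
      by move=> C OC; rewrite /preimage /= cosets_phi; exists C.
    by move=> C D _ _; apply: phi_inj.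
  split => //.
  set n := xget 0%N _.
  have cn : (cosets H #= `I_n)%card by exact: (xgetPex 0%N fin).
  have -> : \sum_(C \in OmK K) (1 : R) = \sum_(D \in cosets H) (1 : R).
    rewrite cosets_phi (fsbig_image (OmK K) phi) //; by move=> C D _ _; apply: phi_inj.
  rewrite fsbig_finite //= sum_const_seq (card_fset_set cn) mulr1; apply: mulVf.
  rewrite pnatr_eq0; apply/eqP => n0.
  move: cn; rewrite n0 II0 card_eq0 => /eqP e.
  have : cosets H H.
    exists 1%g => //; apply/seteqP; split => [y [h Hh <-]|y Hy]; first by rewrite mul1g.
    by exists y => //; rewrite mul1g.
  by rewrite e.
left; split => // finO; apply: fin; rewrite cosets_phi; exact: finite_image.
Qed.

End Index.

Unset Implicit Arguments.
Set Strict Implicit.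

Theorem theorem1p14 (R : realType) (G : groupType) (mu : G -> R) :
  finitely_generated G ->
  (forall x : G, 0 <= mu x) ->
  finite_set (mass_support mu) ->
  \sum_(x \in [set: G]) mu x = 1 ->
  (forall x : G, mu x = mu (x^-1)%g) ->
  generates (mass_support mu) ->
  0 < mu 1%g ->
  measures_index_uniformly (fun n : nat => convn mu n.+1).
Proof.
move=> _ mu0 mufin mu1 musym mugen mue eps e0.
have [alp alp0 halp] := alp_ex mu0 mufin.
exists (2 * N0 (mu 1%g) alp eps)%N => n hn x H sH.
set K := [set (x * h * x^-1)%g | h in H].
have sK : is_subgroup K by apply: conj_sub.
rewrite /mass (lcoset_rc H x) -/K.
have -> : \sum_(g \in rc K x) convn mu n.+1 g = fib mu K n.+1 (rc K x).
  rewrite /fib fsbig_mkcond; apply: eq_fsbigr => g _; rewrite /patch.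
  case: ifPn => [/set_mem /(rc_memE sK) ->|/negP gn]; first by rewrite eqxx mulr1.
  case: eqP => [e|_]; last by rewrite mulr0.
  by exfalso; apply: gn; apply/mem_set; apply/(rc_memE sK).
rewrite fib_Tn.
apply: (@chain_main R (set G) (OmK K) (PK mu) (mu 1%g) alp (inv_index R H)).
- by move=> C D; apply: PK_ge0.
- by move=> C D; apply: PK_sym.
- by move=> C; apply: PK_fin.
- by move=> C _; apply: PK_st.
- by move=> C D; apply: PK_Om.
- exact: mue.
- by move=> C _; apply: PK_lazy.
- exact: alp0.
- by apply: PK_conn.
- exact: iota_ge0.
- exact: Hiota_ok.
- exact: e0.
- exact: leq_trans hn (leqnSn n).
- by exists 1%g.
- by exists x.
- exact: mufin.
Qed.
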